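(* \[ \sum_{n=0}^\infty\frac{(20n^2-4n-1)\,n^2(2n+1)}{2n-1}\cdot\frac{(-1)^n\binom{2n}{n}^5}{2^{12n}}=-\frac{2}{\pi^2}. \] *)

(* Defs.v *)
From Stdlib Require Import Reals.
From Coquelicot Require Import Coquelicot.
Open Scope R_scope.

Definition term16 (n : nat) : R :=
  let x := INR n in
  ((20 * x ^ 2 - 4 * x - 1) * x ^ 2 * (2 * x + 1) / (2 * x - 1))
  * ((-1) ^ n * (Binomial.C (2 * n) n) ^ 5 / 2 ^ (12 * n)).

(* Main.v *)
Require Import Defs.
From Stdlib Require Import Reals Lra Lia.
From Coquelicot Require Import Coquelicot.
Open Scope R_scope.

Fixpoint vv (k : nat) : R := match k with 0%nat => 1 | S k' => vv k' * ((2*INR k'+1)/(2*INR k'+2)) end.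
Definition w k := vv k ^ 4.
Definition rr (n k : nat) : R := -/4 * (INR n + /2)^5 / ((INR n + 1) * (INR n + 1 + INR k)^4).
Fixpoint uu (k n : nat) : R := match n with 0%nat => w k | S n' => uu k n' * rr n' k end.
Definition PP n k := 20*INR n^2 + 8*INR n + 1 + 24*INR k*INR n + 8*INR k^2 + 4*INR k.
Definition GG k n := uu k n * PP n k.
Definition FF k n := uu k n * (8*INR n*(2*INR n+4*INR k+1)).

Lemma uu_Sk k n : uu (S k) n = uu k n * ((2*INR k+1)/(2*(INR n+INR k+1)))^4.
Proof.
  pose proof (pos_INR k) as Hk.
  induction n as [|n IH]; simpl uu.
  - unfold w; simpl vv. simpl INR. field. lra.
  - rewrite IH. unfold rr. rewrite !S_INR. pose proof (pos_INR n). field. repeat split; lra.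
Qed.

Lemma WZ k n : GG (S k) n - GG k n = FF k (S n) - FF k n.
Proof.
  unfold GG, FF, PP. rewrite uu_Sk. simpl uu. unfold rr. rewrite !S_INR.
  pose proof (pos_INR k). pose proof (pos_INR n). field. repeat split; lra.
Qed.

Lemma Rdiv_le_1 x y : 0 < y -> x <= y -> x / y <= 1.
Proof. intros. apply (Rmult_le_reg_r y); auto. unfold Rdiv. rewrite Rmult_assoc, Rinv_l by lra. lra. Qed.

Lemma vv_bounds k : 0 < vv k <= 1.
Proof.
  induction k as [|k IH]; simpl vv; [lra|].
  pose proof (pos_INR k).
  assert (0 < (2*INR k+1)/(2*INR k+2) <= 1).
  { split. apply Rdiv_lt_0_compat; lra. apply Rdiv_le_1; lra. }
  split. apply Rmult_lt_0_compat; lra.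
  replace 1 with (1*1) by ring. apply Rmult_le_compat; lra.
Qed.

Lemma w_bounds k : 0 <= w k <= 1.
Proof.
  unfold w. pose proof (vv_bounds k). split. apply pow_le; lra.
  replace 1 with (1^4) by ring. apply pow_incr; lra.
Qed.

Lemma rr_bound n k : Rabs (rr n k) <= /4.
Proof.
  unfold rr. pose proof (pos_INR n). pose proof (pos_INR k).
  assert (H1: 0 < (INR n + 1) * (INR n + 1 + INR k)^4).
  { apply Rmult_lt_0_compat. lra. apply pow_lt; lra. }
  assert (H2: 0 <= (INR n + /2)^5 <= (INR n + 1) * (INR n + 1 + INR k)^4).
  { split. apply pow_le; lra.
    apply Rle_trans with ((INR n + 1)^5). apply pow_incr; lra.
    replace ((INR n + 1)^5) with ((INR n+1)*(INR n+1)^4) by ring.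
    apply Rmult_le_compat_l. lra. apply pow_incr; lra. }
  replace (- / 4 * (INR n + / 2) ^ 5 / ((INR n + 1) * (INR n + 1 + INR k) ^ 4)) with
   (- (/4 * ((INR n + / 2) ^ 5 / ((INR n + 1) * (INR n + 1 + INR k) ^ 4)))) by (field; lra).
  rewrite Rabs_Ropp, Rabs_mult, (Rabs_pos_eq (/4)) by lra.
  rewrite Rabs_pos_eq. 2: { apply Rdiv_le_0_compat; lra. }
  rewrite <- (Rmult_1_r (/4)) at 2. apply Rmult_le_compat_l. lra.
  apply Rdiv_le_1; lra.
Qed.

Lemma uu_bound k n : Rabs (uu k n) <= w k * (/4)^n.
Proof.
  induction n as [|n IH]; simpl uu.
  - rewrite Rabs_pos_eq by apply w_bounds. simpl; lra.
  - rewrite Rabs_mult. simpl pow.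
    replace (w k * (/4 * (/4)^n)) with ((w k * (/4)^n) * /4) by ring.
    apply Rmult_le_compat; auto using Rabs_pos, rr_bound.
Qed.

Lemma uu_bound1 k n : Rabs (uu k (S n)) <= w k * (/4)^(S n) / (INR k + 1)^4.
Proof.
  pose proof (pos_INR k). pose proof (w_bounds k).
  assert (Hp: 0 < (INR k + 1)^4) by (apply pow_lt; lra).
  induction n as [|n IH].
  - simpl uu. rewrite Rabs_mult, (Rabs_pos_eq (w k)) by lra. unfold rr. simpl INR.
    replace (- / 4 * (0 + / 2) ^ 5 / ((0 + 1) * (0 + 1 + INR k) ^ 4)) with (- (/128/(INR k+1)^4)) by (field; lra).
    rewrite Rabs_Ropp, Rabs_pos_eq. 2: { apply Rlt_le, Rdiv_lt_0_compat; lra. }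
    replace (w k * (/ 4) ^ 1 / (INR k + 1) ^ 4) with (w k * (/4/(INR k+1)^4)) by (simpl; field; lra).
    apply Rmult_le_compat_l. lra. unfold Rdiv. apply Rmult_le_compat_r. apply Rlt_le, Rinv_0_lt_compat; lra. lra.
  - change (uu k (S (S n))) with (uu k (S n) * rr (S n) k). rewrite Rabs_mult.
    apply Rle_trans with ((w k * (/ 4) ^ S n / (INR k + 1) ^ 4) * /4).
    apply Rmult_le_compat; auto using Rabs_pos, rr_bound.
    simpl pow. apply Req_le. field. lra.
Qed.

Lemma lin_bound n : INR n + 1 <= 5 * (6/5)^n.
Proof.
  induction n as [|n IH]. simpl; lra.
  rewrite S_INR. simpl pow.
  assert (1 <= (6/5)^n) by (apply pow_R1_Rle; lra). lra.
Qed.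

Lemma geom_ex (x : nat -> R) C q : 0 <= q < 1 -> (forall n, Rabs (x n) <= C * q^n) -> ex_series x.
Proof.
  intros Hq H. apply (ex_series_le x (fun n => C * q^n)).
  - intros n. exact (H n).
  - exists (C * / (1 - q)). apply (is_series_scal_l C (fun n => q^n)).
    apply is_series_geom. rewrite Rabs_pos_eq; lra.
Qed.

Lemma geom_abs (x : nat -> R) C q : 0 <= q < 1 -> (forall n, Rabs (x n) <= C * q^n) -> Rabs (Series x) <= C / (1 - q).
Proof.
  intros Hq H.
  eapply Rle_trans. apply Series_Rabs. apply (geom_ex _ C q); auto. intros n. rewrite Rabs_Rabsolu; auto.
  eapply Rle_trans. apply (Series_le _ (fun n => C * q^n)).
  intros n; split; auto using Rabs_pos.
  apply (geom_ex _ C q); auto. intros n. pose proof (H n). pose proof (Rabs_pos (x n)).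
  rewrite Rabs_pos_eq. lra. lra.
  rewrite Series_scal_l, Series_geom. right; reflexivity. rewrite Rabs_pos_eq; lra.
Qed.

Lemma geom_lim0 (x : nat -> R) C q : 0 <= q < 1 -> (forall n, Rabs (x n) <= C * q^n) -> is_lim_seq x 0.
Proof. intros. apply ex_series_lim_0. eapply geom_ex; eauto. Qed.

Lemma Cstep n : Binomial.C (2 * S n) (S n) = Binomial.C (2 * n) n * (2 * (2 * INR n + 1) / (INR n + 1)).
Proof.
  unfold Binomial.C.
  replace (2 * S n)%nat with (S (S (2*n))) by lia.
  replace (S (S (2 * n)) - S n)%nat with (S n) by lia.
  replace (2 * n - n)%nat with n by lia.
  rewrite !fact_simpl, !mult_INR, !S_INR, mult_INR. simpl (INR 2).
  pose proof (pos_INR n). pose proof (INR_fact_lt_0 n). pose proof (INR_fact_lt_0 (2*n)).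
  field. lra.
Qed.

Lemma a_uu n : (-1) ^ n * Binomial.C (2 * n) n ^ 5 / 2 ^ (12 * n) = uu 0 n.
Proof.
  induction n as [|n IH].
  - simpl. unfold w, Binomial.C. simpl. field.
  - simpl uu. rewrite <- IH. rewrite Cstep. unfold rr.
    replace (12 * S n)%nat with (12 * n + 12)%nat by lia. rewrite pow_add.
    simpl INR. pose proof (pos_INR n). simpl pow. field.
    split. lra. apply pow_nonzero. lra.
Qed.

Definition II n := RInt (fun x => sin x ^ n) 0 (PI/2).

Lemma exI n : ex_RInt (fun x => sin x ^ n) 0 (PI/2).
Proof. apply (ex_RInt_continuous (V:=R_CompleteNormedModule)). intros z _. apply (ex_derive_continuous (K:=R_AbsRing) (V:=R_NormedModule)). auto_derive. auto. Qed.

Lemma I0 : II 0 = PI/2.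
Proof. unfold II. change (RInt (fun _ => 1) 0 (PI/2) = PI/2). rewrite RInt_const.
  unfold scal; simpl; unfold mult; simpl. ring. Qed.

Lemma I1 : II 1 = 1.
Proof.
  unfold II. apply is_RInt_unique.
  assert (H := is_RInt_derive (V:=R_CompleteNormedModule) (fun x => - cos x) (fun x => sin x ^ 1) 0 (PI/2)).
  assert (E : minus (- cos (PI/2)) (- cos 0) = 1).
  { rewrite cos_PI2, cos_0. unfold minus, plus, opp; simpl. ring. }
  rewrite <- E. apply H. intros x _. auto_derive. auto. ring.
  intros x _. apply (ex_derive_continuous (K:=R_AbsRing) (V:=R_NormedModule)). auto_derive. auto.
Qed.

Lemma Irec n : (INR n + 2) * II (S (S n)) = (INR n + 1) * II n.
Proof.
  set (df := fun x => (INR n + 2) * sin x ^ (S (S n)) - (INR n + 1) * sin x ^ n).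
  assert (H1 : is_RInt df 0 (PI/2) (minus (- cos (PI/2) * sin (PI/2) ^ (S n)) (- cos 0 * sin 0 ^ (S n)))).
  { apply (is_RInt_derive (V:=R_CompleteNormedModule) (fun x => - cos x * sin x ^ (S n))).
    - intros x _. auto_derive. auto. unfold df.
      change (match n with 0%nat => 1 | S _ => INR n + 1 end) with (INR (S n)). rewrite S_INR.
      pose proof (sin2_cos2 x). unfold Rsqr in *. simpl pow.
      replace (- cos x * (1 * cos x * ((INR n + 1) * sin x ^ n))) with (- (cos x * cos x) * ((INR n + 1) * sin x ^ n)) by ring.
      replace (cos x * cos x) with (1 - sin x * sin x) by lra. ring.
    - intros x _. apply (ex_derive_continuous (K:=R_AbsRing) (V:=R_NormedModule)). unfold df. auto_derive. auto. }
  assert (H2 : is_RInt df 0 (PI/2) (minus (scal (INR n+2) (II (S (S n)))) (scal (INR n+1) (II n)))).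
  { apply (is_RInt_minus (V:=R_NormedModule)); apply (is_RInt_scal (V:=R_NormedModule));
    apply (RInt_correct (V:=R_CompleteNormedModule)); apply exI. }
  apply (is_RInt_unique (V:=R_CompleteNormedModule)) in H1. apply (is_RInt_unique (V:=R_CompleteNormedModule)) in H2.
  rewrite H1 in H2. rewrite cos_PI2, sin_0 in H2.
  unfold minus, plus, opp, scal in H2; simpl in H2; unfold mult in H2; simpl in H2.
  revert H2. simpl pow. intros. lra.
Qed.

Lemma Imono n : II (S n) <= II n.
Proof.
  unfold II. apply RInt_le. pose proof PI_RGT_0. lra. apply exI. apply exI.
  intros x Hx. pose proof PI_RGT_0.
  assert (0 <= sin x). { apply sin_ge_0; lra. }
  pose proof (SIN_bound x). simpl pow.
  assert (0 <= sin x ^ n) by (apply pow_le; lra).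
  rewrite <- (Rmult_1_l (sin x ^ n)) at 2. apply Rmult_le_compat_r; lra.
Qed.

Lemma Ieven_odd k : II (2*k) = vv k * (PI/2) /\ (2*INR k+1) * vv k * II (S (2*k)) = 1.
Proof.
  induction k as [|k [IHe IHo]].
  - simpl. rewrite I0, I1. split; ring.
  - replace (2 * S k)%nat with (S (S (2*k))) by lia.
    pose proof (Irec (2*k)) as R1. pose proof (Irec (S (2*k))) as R2.
    rewrite mult_INR in R1. rewrite S_INR, mult_INR in R2. assert (I2 : INR 2 = 2) by (simpl; ring). rewrite I2 in R1, R2.
    pose proof (pos_INR k). simpl vv. rewrite S_INR. split.
    + apply (Rmult_eq_reg_l (2 * INR k + 2)). rewrite R1, IHe. field. lra. lra.
    + replace ((2 * (INR k + 1) + 1) * (vv k * ((2 * INR k + 1) / (2 * INR k + 2))) * II (S (S (S (2 * k)))))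
      with (vv k * ((2 * INR k + 1) / (2 * INR k + 2)) * ((2 * INR k + 1 + 2) * II (S (S (S (2 * k)))))) by ring.
      rewrite R2. transitivity ((2 * INR k + 1) * vv k * II (S (2 * k))); [field; lra | exact IHo].
Qed.

Lemma wallis_up k : INR k * vv k ^ 2 <= / PI.
Proof.
  pose proof PI_RGT_0. assert (0 < /PI) by (apply Rinv_0_lt_compat; lra).
  destruct k as [|j]. simpl. lra.
  destruct (Ieven_odd j) as [_ Ho]. destruct (Ieven_odd (S j)) as [He _].
  pose proof (Imono (S (2*j))) as M.
  replace (S (S (2*j))) with (2 * S j)%nat in M by lia. rewrite He in M.
  pose proof (vv_bounds (S j)) as [Va _]. pose proof (pos_INR j).
  assert (Ev : (2 * INR j + 1) * vv j = (2*INR j+2) * vv (S j)).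
  { simpl vv. field. lra. }
  rewrite Ev in Ho. rewrite S_INR.
  assert (Hc : 0 < (2*INR j+2) * vv (S j)) by (apply Rmult_lt_0_compat; lra).
  apply Rmult_le_compat_r with (r := (2*INR j+2) * vv (S j)) in M; [|lra].
  assert (HH : (INR j + 1) * vv (S j) ^ 2 * PI <= 1).
  { replace ((INR j + 1) * vv (S j) ^ 2 * PI) with (vv (S j) * (PI / 2) * ((2 * INR j + 2) * vv (S j))) by field.
    rewrite <- Ho. lra. }
  apply (Rmult_le_reg_r PI). lra. rewrite Rinv_l by lra. lra.
Qed.

Lemma wallis_low k : INR k * (2 / ((2*INR k+1) * PI)) <= INR k * vv k ^ 2.
Proof.
  pose proof PI_RGT_0. pose proof (pos_INR k).
  apply Rmult_le_compat_l. lra.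
  destruct (Ieven_odd k) as [He Ho].
  pose proof (Imono (2*k)) as M. rewrite He in M.
  pose proof (vv_bounds k) as [Va _].
  assert (Hc : 0 < (2*INR k+1) * vv k) by (apply Rmult_lt_0_compat; lra).
  apply Rmult_le_compat_r with (r := (2*INR k+1) * vv k) in M; [|lra].
  assert (E1 : II (S (2 * k)) * ((2 * INR k + 1) * vv k) = 1).
  { transitivity ((2 * INR k + 1) * vv k * II (S (2 * k))); [ring | exact Ho]. }
  rewrite E1 in M.
  assert (0 < (2 * INR k + 1) * PI) by (apply Rmult_lt_0_compat; lra).
  apply (Rmult_le_reg_r ((2 * INR k + 1) * PI)). lra.
  replace (2 / ((2 * INR k + 1) * PI) * ((2 * INR k + 1) * PI)) with 2 by (field; lra).
  replace (vv k ^ 2 * ((2 * INR k + 1) * PI)) with (2 * (vv k * (PI / 2) * ((2 * INR k + 1) * vv k))) by field.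
  lra.
Qed.

Lemma inv_lim : is_lim_seq (fun k => / (INR k + 1)) 0.
Proof.
  pose proof (is_lim_seq_inv INR p_infty is_lim_seq_INR) as H.
  simpl in H. specialize (H ltac:(discriminate)).
  apply is_lim_seq_incr_1 in H. eapply is_lim_seq_ext; [|exact H].
  intros n. cbv beta. rewrite S_INR. reflexivity.
Qed.

Lemma inv2_lim : is_lim_seq (fun k => / (2 * INR k + 1)) 0.
Proof.
  apply is_lim_seq_le_le with (u := fun _ => 0) (w := fun k => / (INR k + 1)).
  - intros k. pose proof (pos_INR k). split.
    apply Rlt_le, Rinv_0_lt_compat; lra.
    apply Rinv_le_contravar; lra.
  - apply is_lim_seq_const.
  - apply inv_lim.
Qed.

Lemma wallis : is_lim_seq (fun k => INR k * vv k ^ 2) (/ PI).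
Proof.
  pose proof PI_RGT_0.
  apply is_lim_seq_le_le with (u := fun k => /PI - /PI * / (2 * INR k + 1)) (w := fun _ => /PI).
  - intros k. split. 2: apply wallis_up.
    eapply Rle_trans. 2: apply wallis_low. pose proof (pos_INR k). right. field. lra.
  - replace (Finite (/PI)) with (Finite (/PI - /PI * 0)) by (f_equal; ring).
    apply (is_lim_seq_minus' (fun _ => /PI)). apply is_lim_seq_const.
    apply (is_lim_seq_mult' (fun _ => /PI)). apply is_lim_seq_const. apply inv2_lim.
  - apply is_lim_seq_const.
Qed.

Lemma vv2_lim : is_lim_seq (fun k => vv k ^ 2) 0.
Proof.
  pose proof PI_RGT_0.
  apply is_lim_seq_le_le with (u := fun _ => 0) (w := fun k => (/PI + 1) * / (INR k + 1)).
  - intros k. pose proof (pos_INR k). pose proof (vv_bounds k). pose proof (wallis_up k).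
    split. apply pow2_ge_0.
    apply (Rmult_le_reg_r (INR k + 1)). lra.
    replace ((/ PI + 1) * / (INR k + 1) * (INR k + 1)) with (/PI + 1) by (field; lra).
    assert (vv k ^ 2 <= 1) by nra. nra.
  - apply is_lim_seq_const.
  - replace (Finite 0) with (Finite ((/PI+1) * 0)) by (f_equal; ring).
    apply (is_lim_seq_mult' (fun _ => _)). apply is_lim_seq_const. apply inv_lim.
Qed.

Lemma poly2 m : (INR m + 1)^2 <= 25 * (36/25)^m.
Proof.
  pose proof (lin_bound m). pose proof (pos_INR m).
  replace (36/25) with ((6/5)*(6/5)) by field. rewrite Rpow_mult_distr.
  replace (25 * ((6 / 5) ^ m * (6 / 5) ^ m)) with ((5 * (6/5)^m)^2) by ring.
  apply pow_incr. lra.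
Qed.

Lemma q925 n : (/4)^n * (36/25)^n = (9/25)^n.
Proof. rewrite <- Rpow_mult_distr. f_equal. field. Qed.

Lemma PP_bound m k : 0 <= PP m k <= 64*(INR m+1)^2*(INR k+1)^2.
Proof.
  unfold PP. pose proof (pos_INR m). pose proof (pos_INR k).
  set (a := INR m) in *. set (b := INR k) in *.
  assert (0 <= a*b) by nra. assert (0 <= a*a*b) by nra. assert (0 <= a*b*b) by nra.
  assert (0 <= a*a*b*b) by nra.
  split; nra.
Qed.

Lemma GG_bound k n : Rabs (GG k n) <= (1600 * (INR k+1)^2) * (9/25)^n.
Proof.
  unfold GG. rewrite Rabs_mult. pose proof (PP_bound n k) as [P0 P1].
  rewrite (Rabs_pos_eq (PP n k)) by lra.
  pose proof (uu_bound k n). pose proof (w_bounds k). pose proof (poly2 n).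
  pose proof (pos_INR k).
  assert (0 <= (/4)^n) by (apply pow_le; lra).
  apply Rle_trans with ((/4)^n * (64 * (25 * (36/25)^n) * (INR k + 1)^2)).
  - apply Rmult_le_compat. apply Rabs_pos. lra.
    apply Rle_trans with (w k * (/4)^n). auto. nra.
    apply Rle_trans with (1 := P1). apply Rmult_le_compat_r. apply pow2_ge_0. lra.
  - rewrite <- q925. right. ring.
Qed.

Lemma GG_tail k n : Rabs (GG k (S n)) <= (1600 / (INR k+1)^2) * (9/25)^n.
Proof.
  unfold GG. rewrite Rabs_mult. pose proof (PP_bound (S n) k) as [P0 P1].
  rewrite (Rabs_pos_eq (PP (S n) k)) by lra.
  pose proof (uu_bound1 k n). pose proof (w_bounds k). pose proof (poly2 (S n)).
  pose proof (pos_INR k).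
  assert (0 < (INR k+1)^4) by (apply pow_lt; lra).
  assert (0 <= (/4)^(S n)) by (apply pow_le; lra).
  assert (0 <= (/4)^(S n) / (INR k + 1)^4) by (apply Rdiv_le_0_compat; lra).
  apply Rle_trans with (((/4)^(S n) / (INR k + 1)^4) * (64 * (25 * (36/25)^(S n)) * (INR k + 1)^2)).
  - apply Rmult_le_compat. apply Rabs_pos. lra.
    apply Rle_trans with (w k * (/4)^(S n) / (INR k + 1)^4). auto.
    unfold Rdiv. apply Rmult_le_compat_r. apply Rlt_le, Rinv_0_lt_compat; lra. nra.
    apply Rle_trans with (1 := P1). apply Rmult_le_compat_r. apply pow2_ge_0. lra.
  - replace ((/ 4) ^ S n / (INR k + 1) ^ 4 * (64 * (25 * (36 / 25) ^ S n) * (INR k + 1) ^ 2))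
      with ((1600 / (INR k+1)^2) * ((/4)^(S n) * (36/25)^(S n))) by (field; lra).
    rewrite q925. apply Rmult_le_compat_l. apply Rdiv_le_0_compat. lra. apply pow_lt; lra.
    simpl pow. assert (0 <= (9/25)^n) by (apply pow_le; lra). lra.
Qed.

Lemma FF_bound k n : Rabs (FF k n) <= (200 * (4*INR k+2)) * (9/25)^n.
Proof.
  unfold FF. rewrite Rabs_mult. pose proof (pos_INR n). pose proof (pos_INR k).
  rewrite (Rabs_pos_eq (8 * INR n * (2 * INR n + 4 * INR k + 1))) by (apply Rmult_le_pos; nra).
  pose proof (uu_bound k n). pose proof (w_bounds k). pose proof (poly2 n).
  assert (0 <= (/4)^n) by (apply pow_le; lra).
  assert (8 * INR n * (2 * INR n + 4 * INR k + 1) <= 8 * (INR n + 1)^2 * (4*INR k+2)) by nra.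
  apply Rle_trans with ((/4)^n * (8 * (25 * (36/25)^n) * (4*INR k+2))).
  - apply Rmult_le_compat. apply Rabs_pos. apply Rmult_le_pos; nra.
    apply Rle_trans with (w k * (/4)^n). auto. nra.
    apply Rle_trans with (8 * (INR n + 1)^2 * (4*INR k+2)). auto.
    apply Rmult_le_compat_r. lra. lra.
  - rewrite <- q925. right. ring.
Qed.

Definition SS k := Series (GG k).

Lemma q925_bnd : 0 <= 9/25 < 1. Proof. lra. Qed.

Lemma exGG k : ex_series (GG k).
Proof. apply (geom_ex _ _ _ q925_bnd (GG_bound k)). Qed.

Lemma FF0 k : FF k 0 = 0.
Proof. unfold FF. simpl INR. ring. Qed.

Lemma tele k N : sum_n (fun n => GG (S k) n - GG k n) N = FF k (S N).
Proof.
  rewrite sum_n_Reals.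
  induction N as [|N IH].
  - simpl. rewrite WZ, FF0. ring.
  - simpl sum_f_R0. rewrite IH. rewrite WZ. change (FF k (S N) + (FF k (S (S N)) - FF k (S N)) = FF k (S (S N)) :> R). ring.
Qed.

Lemma SS_const k : SS (S k) = SS k.
Proof.
  assert (H1 : is_series (fun n => GG (S k) n - GG k n) (SS (S k) - SS k)).
  { apply (is_series_minus (GG (S k)) (GG k)); apply Series_correct; apply exGG. }
  assert (H2 : is_series (fun n => GG (S k) n - GG k n) 0).
  { change (is_lim_seq (sum_n (fun n => GG (S k) n - GG k n)) 0).
    apply is_lim_seq_ext with (u := fun N => FF k (S N)). intros; symmetry; apply tele.
    apply (is_lim_seq_incr_1 (FF k)). apply (geom_lim0 _ _ _ q925_bnd (FF_bound k)). }
  apply is_series_unique in H1. apply is_series_unique in H2. lra.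
Qed.

Lemma SS_all k : SS k = SS 0.
Proof. induction k as [|k IH]. reflexivity. rewrite SS_const. exact IH. Qed.

Lemma head_lim : is_lim_seq (fun k => GG k 0) (8 / PI^2).
Proof.
  pose proof PI_RGT_0.
  apply is_lim_seq_ext with
    (u := fun k => 8 * ((INR k * vv k ^ 2) * (INR k * vv k ^ 2)) + 4 * ((INR k * vv k ^ 2) * vv k ^ 2) + vv k ^ 2 * vv k ^ 2).
  { intros k. unfold GG, PP, w. simpl uu. unfold w. simpl INR. ring. }
  replace (8 / PI^2) with (8 * (/PI * /PI) + 4 * (/PI * 0) + 0 * 0) by (field; lra).
  pose proof wallis. pose proof vv2_lim.
  apply is_lim_seq_plus'. apply is_lim_seq_plus'.
  - apply (is_lim_seq_scal_l _ 8 (/PI * /PI)). apply is_lim_seq_mult'; auto.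
  - apply (is_lim_seq_scal_l _ 4 (/PI * 0)). apply is_lim_seq_mult'; auto.
  - apply is_lim_seq_mult'; auto.
Qed.

Lemma tail_lim : is_lim_seq (fun k => Series (fun n => GG k (S n))) 0.
Proof.
  apply is_lim_seq_abs_0.
  apply is_lim_seq_le_le with (u := fun _ => 0) (w := fun k => 2500 * (/ (INR k + 1) * / (INR k + 1))).
  - intros k. split. apply Rabs_pos.
    eapply Rle_trans. apply (geom_abs _ _ _ q925_bnd (GG_tail k)).
    pose proof (pos_INR k). right. field. lra.
  - apply is_lim_seq_const.
  - replace (Finite 0) with (Finite (2500 * (0 * 0))) by (f_equal; ring).
    apply (is_lim_seq_scal_l _ 2500 (0 * 0)). apply is_lim_seq_mult'; apply inv_lim.
Qed.

Lemma SS0 : SS 0 = 8 / PI^2.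
Proof.
  assert (H : is_lim_seq (fun k => SS k) (8 / PI^2)).
  { apply is_lim_seq_ext with (u := fun k => GG k 0 + Series (fun n => GG k (S n))).
    intros k. unfold SS. symmetry. apply Series_incr_1. apply exGG.
    replace (8 / PI^2) with (8 / PI^2 + 0) by ring.
    apply is_lim_seq_plus'. apply head_lim. apply tail_lim. }
  apply is_lim_seq_ext with (v := fun _ => SS 0) in H. 2: { intros; apply SS_all. }
  apply is_lim_seq_unique in H. rewrite Lim_seq_const in H. injection H. auto.
Qed.

Definition RR n := -32 * INR n ^ 5 / (2 * INR n - 1) * uu 0 n.

Lemma den_nz n : 2 * INR n - 1 <> 0.
Proof. destruct n. simpl; lra. rewrite S_INR. pose proof (pos_INR n). lra. Qed.

Lemma term_decomp n : term16 n = -/4 * GG 0 n + (RR (S n) - RR n).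
Proof.
  unfold term16. cbv zeta. rewrite a_uu.
  unfold GG, PP, RR. simpl uu. unfold rr. rewrite S_INR. simpl (INR 0).
  pose proof (den_nz n). pose proof (pos_INR n).
  field. repeat split; lra.
Qed.

Lemma RR_bound n : Rabs (RR n) <= (32 * 3125) * (7776/12500)^n.
Proof.
  unfold RR. pose proof (pos_INR n).
  assert (Hq : Rabs (INR n ^ 5 / (2 * INR n - 1)) <= (INR n + 1)^5).
  { destruct n. simpl. rewrite Rmult_0_l. unfold Rdiv. rewrite Rmult_0_l, Rabs_R0. lra.
    rewrite S_INR in *. pose proof (pos_INR n).
    rewrite Rabs_pos_eq. 2: { apply Rdiv_le_0_compat. apply pow_le; lra. lra. }
    apply Rle_trans with ((INR n + 1)^5).
    unfold Rdiv. rewrite <- (Rmult_1_r ((INR n + 1)^5)) at 2. apply Rmult_le_compat_l.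
    apply pow_le; lra. rewrite <- Rinv_1. apply Rinv_le_contravar; lra.
    apply pow_incr; lra. }
  replace (-32 * INR n ^ 5 / (2 * INR n - 1) * uu 0 n) with (-32 * (INR n ^ 5 / (2 * INR n - 1)) * uu 0 n) by (unfold Rdiv; ring).
  rewrite !Rabs_mult. replace (Rabs (-32)) with 32 by (rewrite Rabs_left; lra).
  pose proof (uu_bound 0 n). pose proof (w_bounds 0). pose proof (lin_bound n).
  assert (0 <= (/4)^n) by (apply pow_le; lra).
  assert (H5 : (INR n + 1)^5 <= 3125 * (7776/3125)^n).
  { replace (7776/3125) with ((6/5)^5) by field. rewrite <- pow_mult, Nat.mul_comm, pow_mult.
    replace 3125 with (5^5) by ring. rewrite <- Rpow_mult_distr. apply pow_incr. lra. }
  apply Rle_trans with (32 * (3125 * (7776/3125)^n) * (/4)^n).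
  - apply Rmult_le_compat. apply Rmult_le_pos. lra. apply Rabs_pos. apply Rabs_pos.
    apply Rmult_le_compat_l. lra. lra.
    apply Rle_trans with (w 0 * (/4)^n). auto. nra.
  - replace (7776/12500) with ((7776/3125) * /4) by field. rewrite Rpow_mult_distr. right; ring.
Qed.

Lemma RR_lim : is_lim_seq RR 0.
Proof. apply (geom_lim0 RR (32 * 3125) (7776/12500)). lra. apply RR_bound. Qed.

Lemma RR0 : RR 0 = 0.
Proof. unfold RR. simpl INR. unfold Rdiv. ring. Qed.

Theorem mainTheorem16 : is_series term16 (- 2 / PI ^ 2).
Proof.
  pose proof PI_RGT_0.
  assert (HG : is_series (GG 0) (8 / PI^2)).
  { rewrite <- SS0. apply Series_correct. apply exGG. }
  assert (HT : is_series (fun n => RR (S n) - RR n) 0).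
  { change (is_lim_seq (sum_n (fun n => RR (S n) - RR n)) 0).
    apply is_lim_seq_ext with (u := fun N => RR (S N)).
    { intros N. rewrite sum_n_Reals. induction N as [|N IH].
      - simpl. rewrite RR0. ring.
      - simpl sum_f_R0. rewrite <- IH. ring. }
    apply (is_lim_seq_incr_1 RR). apply RR_lim. }
  apply (is_series_scal_l (-/4)) in HG.
  pose proof (is_series_plus _ _ _ _ HG HT) as HS.
  eapply is_series_ext. intros n. symmetry. apply term_decomp.
  replace (- 2 / PI ^ 2) with (plus (-/4 * (8 / PI^2)) 0). exact HS.
  unfold plus; simpl. field. lra.
Qed.
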